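(* Let $\mathcal{G},\mathcal{H}$ be hypergraphs on a common vertex set with $r=\mathrm{rank}(\mathcal{H})$. Then $\mathcal{G}=\mathrm{Tr}(\mathcal{H})$ if and only if all three of the following hold: (1) $\mathcal{G}\subseteq\mathrm{Tr}(\mathcal{H})$; (2) $\mathrm{Tr}(\mathcal{G})|_r\subseteq\mathcal{H}$; (3) $\mathrm{rank}(\mathrm{Tr}(\mathcal{G}))\le r$.
   Context: $\mathrm{rank}(\mathcal{H})$ is the maximum edge size. $\mathrm{Tr}(\mathcal{H})$ is the set of inclusion-wise minimal hitting sets of $\mathcal{H}$ (sets meeting every edge, minimal under inclusion). $\mathrm{Tr}(\mathcal{G})|_r$ is the set of minimal hitting sets of $\mathcal{G}$ with at most $r$ vertices. Hypergraphs need not be Sperner (an edge may contain another). *)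

(* Defs.v *)
From mathcomp Require Import all_boot.
Set Implicit Arguments. Unset Strict Implicit. Unset Printing Implicit Defensive.

(* A hypergraph on the finite vertex set T is a set of edges {set {set T}};
   it need not be Sperner. *)
Definition hypergraph (T : finType) := {set {set T}}.

Definition hitting (T : finType) (H : {set {set T}}) (A : {set T}) : bool :=
  [forall E in H, A :&: E != set0].

Definition Tr (T : finType) (H : {set {set T}}) : {set {set T}} :=
  [set A | minset (hitting H) A].

(* rank(H): maximum edge size (0 for the empty hypergraph) *)
Definition rank (T : finType) (H : {set {set T}}) : nat :=
  \max_(E in H) #|E|.

Definition restr (T : finType) (H : {set {set T}}) (r : nat) : {set {set T}} :=
  [set A in H | #|A| <= r].

(* Main.v *)
Require Import Defs.
From mathcomp Require Import all_boot.

Lemma inTr (T : finType) (G : {set {set T}}) A :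
  (A \in Tr G) = minset (hitting G) A.
Proof. by rewrite inE. Qed.

Lemma hitP (T : finType) (G : {set {set T}}) A :
  reflect (forall E, E \in G -> A :&: E != set0) (hitting G A).
Proof. exact: forall_inP. Qed.

Lemma L1 (T : finType) (G : {set {set T}}) A :
  hitting (Tr G) A -> exists2 E, E \in G & E \subset A.
Proof.
move=> hA; case: (boolP [exists E in G, E \subset A]).
  by case/exists_inP=> E EG EA; exists E.
rewrite negb_exists_in => /forall_inP nE.
have hC : hitting G (~: A).
  apply/hitP=> E EG; rewrite setIC -setDE setD_eq0; exact: nE.
case: (minset_exists hC) => M mM sM.
have MT : M \in Tr G by rewrite inTr.
move/hitP: hA => /(_ M MT); case/set0Pn=> x; rewrite inE => /andP[xA xM].
by move: (subsetP sM x xM); rewrite inE xA.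
Qed.

Lemma TrTr (T : finType) (H : {set {set T}}) : Tr (Tr H) \subset H.
Proof.
apply/subsetP=> B; rewrite inTr => mB.
have hB := minsetp mB.
case: (L1 _ _ _ hB) => E EH EB.
have hE : hitting (Tr H) E.
  apply/hitP=> M; rewrite inTr => /minsetp/hitP/(_ E EH); by rewrite setIC.
by rewrite -(minsetinf mB hE EB).
Qed.

Lemma rank_sub (T : finType) (G H : {set {set T}}) :
  G \subset H -> rank G <= rank H.
Proof.
move=> sGH; apply/bigmax_leqP=> E EG.
rewrite /rank; exact: (@leq_bigmax_cond _ (mem H) (fun E => #|E|) _ (subsetP sGH E EG)).
Qed.

Theorem lemma10 (T : finType) (G H : {set {set T}}) :
  G = Tr H <->
  [/\ G \subset Tr H,
      restr (Tr G) (rank H) \subset H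
    & rank (Tr G) <= rank H].
Proof.
split.
  move=> ->; split; first exact: subxx.
    apply/subsetP=> A; rewrite inE => /andP[AT _]; exact: (subsetP (TrTr _ H)).
  exact: rank_sub (TrTr _ H).
case=> sG sR rk.
have sTG : Tr G \subset H.
  apply/subsetP=> B BT; apply: (subsetP sR); rewrite inE BT /=.
  apply: leq_trans rk; rewrite /rank; exact: (@leq_bigmax_cond _ (mem (Tr G)) (fun E => #|E|) _ BT).
apply/eqP; rewrite eqEsubset sG /=; apply/subsetP=> A AT.
have mA : minset (hitting H) A by rewrite -inTr.
have hA : hitting (Tr G) A.
  apply/hitP=> B BT; move/hitP: (minsetp mA); apply; exact: (subsetP sTG B BT).
case: (L1 _ _ _ hA) => C CG CA.
have mC : minset (hitting H) C by rewrite -inTr (subsetP sG).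
by rewrite -(minsetinf mA (minsetp mC) CA).
Qed.
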